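(* For $n\geq0$ let $$D_n=\Big\{F:\mathbb{C}\to\mathbb{C}\text{ additive}\ \Big|\ F(\alpha^{n+1})=\sum_{i=1}^{n}\binom{n+1}{i}(-1)^{n-i}\,\alpha^{n+1-i}\,F(\alpha^i)\text{ for all }\alpha\in\mathbb{C}\Big\}$$ (so $D_0=\{0\}$ and $D_1$ is the set of derivations of $\mathbb{C}$). Then for every $n\geq1$, $D_n\subseteq D_{n+1}$. Moreover, if $D$ is a non-trivial derivation on $\mathbb{C}$, then the $(n+1)$-fold composition $D^{n+1}=D\circ\cdots\circ D$ belongs to $D_{n+1}\setminus D_n$.
   Context: A derivation on $\mathbb{C}$ is an additive map $D:\mathbb{C}\to\mathbb{C}$ with $D(xy)=xD(y)+yD(x)$. *)

(* Defs.v *)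
From HB Require Import structures.
From mathcomp Require Import all_boot all_order all_algebra.
From mathcomp Require Import complex.
From mathcomp Require Import reals Rstruct.
Set Implicit Arguments. Unset Strict Implicit. Unset Printing Implicit Defensive.
Import Order.TTheory GRing.Theory Num.Theory.
Local Open Scope ring_scope.

Definition CC : Type := (Rdefinitions.R)[i].

Definition additive_map (F : CC -> CC) : Prop :=
  forall x y : CC, F (x + y) = F x + F y.

Definition derivation (D : CC -> CC) : Prop :=
  additive_map D /\ forall x y : CC, D (x * y) = x * D y + y * D x.

Definition in_Dn (n : nat) (F : CC -> CC) : Prop :=
  additive_map F /\
  forall a : CC,
    F (a ^+ n.+1) =
    \sum_(1 <= i < n.+1)
       ('C(n.+1, i)%:R * (-1) ^+ (n - i) * a ^+ (n.+1 - i) * F (a ^+ i)).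

(* Main.v *)
Require Import Defs.
From mathcomp Require Import all_boot all_order all_algebra.
From mathcomp Require Import complex.
From mathcomp Require Import reals Rstruct.
From mathcomp Require Import ring.
Import Order.TTheory GRing.Theory Num.Theory.
Local Open Scope ring_scope.

Definition ad {R : comPzRingType} (a : R) (L : R -> R) : R -> R :=
  fun x => L (a * x) - a * L x.

Lemma adE {R : comPzRingType} (a : R) L x : ad a L x = L (a * x) - a * L x.
Proof. by []. Qed.

Lemma iter_adS {R : comPzRingType} (a : R) k L x :
  iter k.+1 (ad a) L x = iter k (ad a) L (a * x) - a * iter k (ad a) L x.
Proof. by []. Qed.

Lemma ad_comm {R : comPzRingType} (a b : R) L k x :
  iter k (ad a) (ad b L) x = ad b (iter k (ad a) L) x.
Proof.
elim: k x => [|k IH] x //.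
rewrite iter_adS !IH /ad /= mulrCA.
set M := iter k (ad a) L.
rewrite (mulrCA a b x); ring.
Qed.

Lemma iter_ad_expand {R : comPzRingType} (a : R) L m x :
  iter m (ad a) L x =
  \sum_(i < m.+1) 'C(m, i)%:R * (-a) ^+ (m - i) * L (a ^+ i * x).
Proof.
elim: m x => [|m IH] x.
  by rewrite big_ord1 bin0 subnn !expr0 !mul1r.
rewrite iter_adS !IH [RHS]big_ord_recl bin0 subn0 expr0 mul1r.
have -> : \sum_(i < m.+1) 'C(m.+1, bump 0 i)%:R * (- a) ^+ (m.+1 - bump 0 i) *
      L (a ^+ bump 0 i * x) =
    \sum_(i < m.+1) 'C(m, i)%:R * (- a) ^+ (m - i) * L (a ^+ i * (a * x)) +
    \sum_(i < m.+1) 'C(m, i.+1)%:R * (- a) ^+ (m - i) * L (a ^+ i.+1 * x).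
  rewrite -big_split; apply: eq_bigr => i _ /=.
  rewrite /bump /= add1n binS natrD subSS exprSr -(mulrA _ a x); ring.
rewrite addrCA; congr (_ + _).
rewrite [X in _ = _ + X]big_ord_recr /= bin_small // !mul0r addr0.
have -> : \sum_(i < m) 'C(m, i.+1)%:R * (- a) ^+ (m - i) * L (a ^+ i.+1 * x)
  = \sum_(i < m) - (a * ('C(m, bump 0 i)%:R * (- a) ^+ (m - bump 0 i) * L (a ^+ bump 0 i * x))).
  apply: eq_bigr => i _; rewrite /bump /= add1n.
  rewrite -(subnSK (ltn_ord i)) exprS; ring.
rewrite mulr_sumr -sumrN.
rewrite [LHS]big_ord_recl /= bin0 subn0 expr0.
congr (_ + _); by rewrite !mul1r exprS !mulNr mulrA.
Qed.

Lemma iter_ad_formal (F : CC -> CC) k a :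
  iter k.+1 (ad a) F 1 = F (a ^+ k.+1) -
   \sum_(1 <= i < k.+1)
       ('C(k.+1, i)%:R * (-1) ^+ (k - i) * a ^+ (k.+1 - i) * F (a ^+ i))
   + (-a) ^+ k.+1 * F 1.
Proof.
rewrite iter_ad_expand big_ord_recl big_ord_recr /= bin0 subn0 binn subnn.
rewrite big_add1 /= big_mkord !expr0 !mulr1 !mul1r.
set S := \sum_(i < k) _.
have -> : S = - \sum_(i < k) 'C(k.+1, i.+1)%:R * (-1) ^+ (k - i.+1) *
     a ^+ (k.+1 - i.+1) * F (a ^+ i.+1).
  rewrite /S -sumrN; apply: eq_bigr => i _.
  rewrite /bump /= !add1n !subSS mulr1 -(subnSK (ltn_ord i)); set e := (k - i.+1)%N; rewrite !exprS (exprNn a); ring.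
rewrite /bump /= add1n; ring.
Qed.

Lemma iter_ad1 (F : CC -> CC) k x : iter k.+1 (ad 1) F x = 0.
Proof. by rewrite iter_adS !mul1r subrr. Qed.

Lemma in_Dn_F1 k F : in_Dn k F -> F 1 = 0.
Proof.
move=> [_ H]; have := iter_ad_formal F k 1.
rewrite iter_ad1 H subrr add0r => /esym /eqP.
rewrite mulf_eq0 => /orP [|/eqP] //; by rewrite expf_eq0 oppr_eq0 oner_eq0 andbF.
Qed.

Lemma in_Dn_iff k F : additive_map F -> F 1 = 0 ->
  (in_Dn k F <-> forall a, iter k.+1 (ad a) F 1 = 0).
Proof.
move=> Fa F1; split.
  by move=> [_ H] a; rewrite iter_ad_formal H F1 mulr0 subrr addr0.
move=> H; split => // a; apply/eqP; rewrite -subr_eq0; apply/eqP.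
by have := iter_ad_formal F k a; rewrite H F1 mulr0 addr0 => <-.
Qed.

Lemma additive0 {L : CC -> CC} : additive_map L -> L 0 = 0.
Proof.
move=> La; have := La 0 0; rewrite addr0 => /(congr1 (fun z => z - L 0)).
by rewrite subrr addrK => <-.
Qed.

Lemma additive_ad {L : CC -> CC} a : additive_map L -> additive_map (ad a L).
Proof. by move=> La x y; rewrite /ad mulrDr !La mulrDr; ring. Qed.

Lemma additive_iter {L : CC -> CC} a k : additive_map L -> additive_map (iter k (ad a) L).
Proof. by move=> La; elim: k => [|k IH] //=; apply: additive_ad. Qed.

Lemma additive_natmul {L : CC -> CC} (y : CC) N : additive_map L -> L (y *+ N) = L y *+ N.
Proof.
move=> La; elim: N => [|N IH]; first by rewrite !mulr0n additive0.
by rewrite !mulrS La IH.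
Qed.

Definition Fhat (F : CC -> CC) (p : {poly CC}) : {poly CC} :=
  \poly_(i < size p) F p`_i.

Lemma Fhat_coef F p i : additive_map F -> (Fhat F p)`_i = F p`_i.
Proof.
move=> Fa; rewrite coef_poly; case: ltnP => // H.
by rewrite nth_default // additive0.
Qed.

Lemma Fhat_horner F p (m : nat) : additive_map F ->
  (Fhat F p).[m%:R] = F p.[m%:R].
Proof.
move=> Fa; rewrite horner_poly horner_coef.
rewrite (big_morph F (id1:=0) (op1:=+%R) (fun x y => Fa x y) (additive0 Fa)); apply: eq_bigr => i _.
by rewrite -natrX !mulr_natr additive_natmul.
Qed.

Definition Apol (a b : CC) : {poly CC} := a%:P + b%:P * 'X.

Lemma Apol_coef0 a b p : (Apol a b * p)`_0 = a * p`_0.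
Proof. by rewrite /Apol mulrDl -mulrA (mulrC 'X) coefD !coefCM coefMX /= mulr0 addr0. Qed.

Lemma Apol_coef1 a b p : (Apol a b * p)`_1 = a * p`_1 + b * p`_0.
Proof. by rewrite /Apol mulrDl -mulrA (mulrC 'X) coefD !coefCM coefMX. Qed.

Lemma Apol_eval F a b k p (m : nat) : additive_map F ->
  (iter k (ad (Apol a b)) (Fhat F) p).[m%:R] =
  iter k (ad (a + b * m%:R)) F p.[m%:R].
Proof.
move=> Fa; elim: k p => [|k IH] p /=; first exact: Fhat_horner.
rewrite /ad hornerD hornerN hornerM !IH hornerM.
by rewrite /Apol hornerD hornerC hornerM hornerC hornerX.
Qed.

Lemma Apol_coefs F a b k : additive_map F -> forall p,
  (iter k (ad (Apol a b)) (Fhat F) p)`_0 = iter k (ad a) F p`_0 /\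
  (iter k (ad (Apol a b)) (Fhat F) p)`_1 =
     iter k (ad a) F p`_1 + k%:R * iter k.-1 (ad a) (ad b F) p`_0.
Proof.
move=> Fa; elim: k => [|k IH] p.
  by rewrite /= !Fhat_coef // mul0r addr0.
have [IH0 IH1] := IH p; have [IHA0 IHA1] := IH (Apol a b * p).
rewrite !iter_adS !coefB Apol_coef0 Apol_coef1 IH0 IHA0 IHA1 IH1 Apol_coef0 Apol_coef1.
split => //.
have La := additive_iter a k Fa.
have C x : iter k (ad a) (ad b F) x = iter k (ad a) F (b * x) - b * iter k (ad a) F x by rewrite ad_comm.
rewrite La /=.
case: k {IH IH0 IH1 IHA0 IHA1} La C => [|k] La C.
  by rewrite /= mul0r !addr0 adE; ring.
have D x : iter k.+1 (ad a) (ad b F) x =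
  iter k (ad a) (ad b F) (a * x) - a * iter k (ad a) (ad b F) x by [].
rewrite [k.+1.-1]/= [k.+2%:R]mulrSr mulrDl mul1r {2}C D; ring.
Qed.

Lemma polar F n : additive_map F -> (forall c, iter n.+1 (ad c) F 1 = 0) ->
  forall a b, iter n (ad a) (ad b F) 1 = 0.
Proof.
move=> Fa H a b.
set q := iter n.+1 (ad (Apol a b)) (Fhat F) 1.
have q0 : q = 0.
  apply/eqP; apply/negPn/negP => nz.
  have Hall : all (root q) [seq i%:R | i <- iota 0 (size q)].
    apply/allP => x /mapP [i _ ->].
    by rewrite /root /q Apol_eval // hornerC H.
  have Hu : uniq [seq i%:R : CC | i <- iota 0 (size q)].
    rewrite map_inj_uniq ?iota_uniq // => i j /eqP.
    by rewrite eqr_nat => /eqP.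
  have := max_poly_roots nz Hall Hu.
  by rewrite size_map size_iota ltnn.
have [_ C1] := Apol_coefs F a b n.+1 Fa 1.
move: C1; rewrite -/q q0 coef0 coef1 /= (additive0 (additive_ad a (additive_iter a n Fa))) coef1 /= add0r.
move/esym/eqP; rewrite mulf_eq0 pnatr_eq0 /=.
by move/eqP.
Qed.

Lemma part1 n F : in_Dn n F -> in_Dn n.+1 F.
Proof.
move=> HF; have F1 := in_Dn_F1 _ _ HF; have Fa := HF.1.
have H := (in_Dn_iff n F Fa F1).1 HF.
apply/(in_Dn_iff n.+1 F Fa F1) => a.
have P := polar F n Fa H a (a ^+ 2).
rewrite ad_comm adE expr2 -mulrA in P.
have Ha := H a; rewrite iter_adS in Ha.
rewrite !iter_adS.
set L := iter n (ad a) F in P Ha *.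
transitivity ((L (a * (a * 1)) - a * a * L 1) - 2%:R * a * (L (a * 1) - a * L 1)).
  ring.
by rewrite P Ha mulr0 subr0.
Qed.

Lemma additiveN {L : CC -> CC} : additive_map L -> forall x, L (- x) = - L x.
Proof.
move=> La x; apply/eqP; rewrite -subr_eq0 opprK addrC -La subrr.
by rewrite (additive0 La).
Qed.

Lemma iter_ad_ext (a : CC) L1 L2 m : (forall y, L1 y = L2 y) ->
  forall x, iter m (ad a) L1 x = iter m (ad a) L2 x.
Proof. by move=> E; elim: m => [|m IH] x //=; rewrite !adE !IH. Qed.

Lemma iter_ad_lin (a c : CC) L1 L2 m x :
  iter m (ad a) (fun y => L1 y + c * L2 y) x =
  iter m (ad a) L1 x + c * iter m (ad a) L2 x.
Proof.
elim: m x => [|m IH] x //.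
by rewrite !iter_adS !IH; ring.
Qed.

Section Der.
Variable D : CC -> CC.
Hypothesis HD : derivation D.

Lemma D1 : D 1 = 0.
Proof.
have := HD.2 1 1; rewrite !mul1r => /(congr1 (fun z => z - D 1)).
by rewrite subrr addrK.
Qed.

Lemma ad_decomp a M m x :
  iter m.+1 (ad a) (fun y => D (M y)) x =
  iter m (ad a) (fun y => D (ad a M y)) x + D a * iter m (ad a) M x.
Proof.
rewrite iterSr -iter_ad_lin; apply: iter_ad_ext => y.
rewrite !adE HD.1 (additiveN HD.1) HD.2; ring.
Qed.

Lemma lead_step a k : forall M c, (forall x, iter k (ad a) M x = c * x) ->
  forall x, iter k.+1 (ad a) (fun y => D (M y)) x = k.+1%:R * D a * c * x.
Proof.
elim: k => [|k IH] M c HM x.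
  have HM' y : M y = c * y := HM y.
  rewrite /= adE !HM' HD.2 HD.2 (HD.2 c x); ring.
rewrite (ad_decomp a M k.+1 x) (IH (ad a M) c) ?HM; last by move=> y; rewrite -iterSr HM.
rewrite mulrSr; ring.
Qed.

Lemma lead a j x : iter j (ad a) (iter j D) x = j`!%:R * D a ^+ j * x.
Proof.
elim: j x => [|j IH] x; first by rewrite /= mul1r mul1r.
have := lead_step a j (iter j D) (j`!%:R * D a ^+ j) IH x.
move=> ->; rewrite factS natrM exprS; ring.
Qed.

Lemma lead0 a j x : iter j.+1 (ad a) (iter j D) x = 0.
Proof. by rewrite iter_adS !lead; ring. Qed.

End Der.

Lemma additive_iterD D k : additive_map D -> additive_map (iter k D).
Proof. by move=> Da; elim: k => [|k IH] x y //=; rewrite IH Da. Qed.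

Theorem proposition4p4 :
  (forall (n : nat), (1 <= n)%N ->
     forall F : CC -> CC, in_Dn n F -> in_Dn n.+1 F) /\
  (forall (D : CC -> CC), derivation D -> (exists x : CC, D x <> 0) ->
     forall (n : nat), (1 <= n)%N ->
       in_Dn n.+1 (iter n.+1 D) /\ ~ in_Dn n (iter n.+1 D)).
Proof.
split; first by move=> n _ F; exact: part1.
move=> D HD [x0 Hx0] n _.
have La := additive_iterD D n.+1 HD.1.
have L1 : iter n.+1 D 1 = 0.
  elim: n {La} => [|n IH]; first exact: (D1 D HD).
  by rewrite iterS IH (additive0 HD.1).
split.
  by apply/(in_Dn_iff n.+1 _ La L1) => a; exact: lead0.
move/(in_Dn_iff n _ La L1) => H; apply: Hx0.
have := H x0; rewrite lead // mulr1 => /eqP.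
rewrite mulf_eq0 pnatr_eq0 eqn0Ngt fact_gt0 /= expf_eq0 /=.
by move/eqP.
Qed.
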